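(* Let $S$ be a nonempty complete lattice and let $F:S\to 2^S$ be a lower V-ascending correspondence. Suppose that for every $x\in S$, the value $F(x)$ has a least element. Then $F$ has a least fixed point, i.e. the set $\{s\in S:s\in F(s)\}$ is nonempty and has a least element.
   Context: A poset $S$ is a complete lattice if every nonempty subset has a supremum and infimum in $S$. A correspondence $F:S\to 2^S$ on a lattice $S$ is lower V-ascending if for all $x<x'$ in $S$ (strict inequality), every $y\in F(x)$ and every $y'\in F(x')$, one has $y\wedge y'\in F(x)$. *)

(* Defs.v *)
From mathcomp Require Import all_boot all_order.
Set Implicit Arguments. Unset Strict Implicit. Unset Printing Implicit Defensive.
Import Order.TTheory.
Local Open Scope order_scope.

(* Subsets of a type are predicates [T -> Prop]; a correspondence
   F : S -> 2^S is a function [S -> (S -> Prop)], with [y \in F x] read as [F x y]. *)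

Definition is_upper_bound d (T : porderType d) (A : T -> Prop) (u : T) :=
  forall a, A a -> a <= u.
Definition is_lower_bound d (T : porderType d) (A : T -> Prop) (l : T) :=
  forall a, A a -> l <= a.

Definition is_sup d (T : porderType d) (A : T -> Prop) (s : T) :=
  is_upper_bound A s /\ forall u, is_upper_bound A u -> s <= u.
Definition is_inf d (T : porderType d) (A : T -> Prop) (s : T) :=
  is_lower_bound A s /\ forall l, is_lower_bound A l -> l <= s.

Definition complete_lattice d (T : porderType d) :=
  forall A : T -> Prop, (exists a, A a) ->
    (exists s, is_sup A s) /\ (exists s, is_inf A s).

Definition is_least d (T : porderType d) (A : T -> Prop) (m : T) :=
  A m /\ forall a, A a -> m <= a.

Definition lower_V_ascending d (T : latticeType d) (F : T -> T -> Prop) :=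
  forall x x' : T, x < x' ->
    forall y y', F x y -> F x' y' -> F x (y `&` y').

Definition fixed_points d (T : porderType d) (F : T -> T -> Prop) : T -> Prop :=
  fun s => F s s.

(* Main.v *)
Require Import Defs.
From mathcomp Require Import all_boot all_order.
Import Order.TTheory.
Local Open Scope order_scope.

Theorem lemma2p10 (d : Order.disp_t) (S : latticeType d)
  (S_nonempty : exists x : S, True)
  (S_complete : complete_lattice S)
  (F : S -> S -> Prop)
  (F_lva : lower_V_ascending F)
  (F_least : forall x : S, exists m, is_least (F x) m) :
  (exists s, fixed_points F s) /\ (exists m, is_least (fixed_points F) m).
Proof.
have mono : forall x x' y y', x <= x' -> is_least (F x) y -> is_least (F x') y' -> y <= y'.
  move=> x x' y y' hxx [Fy ly] [Fy' ly'].
  have [exx'|ltx] : x = x' \/ x < x'.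
    by move: hxx; rewrite le_eqVlt => /orP [/eqP ->|?]; [left|right].
    by subst x'; apply: ly; exact: Fy'.
  apply: le_trans (ly _ (F_lva _ _ ltx _ _ Fy Fy')) _; exact: leIr.
pose A := fun x : S => exists y, is_least (F x) y /\ y <= x.
have [[s [ubs _]] _] := S_complete (fun _ => True) S_nonempty.
have As : A s by have [y my] := F_least s; exists y; split => //; apply: ubs.
have [_ [a [lba gla]]] := S_complete A (ex_intro _ s As).
have [b mb] := F_least a.
have lbb : is_lower_bound A b.
  move=> x [y [my yx]].
  have ax : a <= x by apply: lba; exists y.
  exact: le_trans (mono _ _ _ _ ax mb my) yx.
have ba : b <= a by apply: gla.
have [c mc] := F_least b.
have Ab : A b by exists c; split => //; apply: mono mc mb.
have ab : a <= b by apply: lba.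
have eab : a = b by apply/le_anti; rewrite ab ba.
have Faa : F a a by rewrite {2}eab; case: mb.
split; first by exists a.
exists a; split => // t Ftt.
apply: lba; have [y my] := F_least t; exists y; split => //; case: my => _ h; exact: h.
Qed.
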